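(* Let $(p_m)$ and $(q_n)$ belong to $SVA_{reg(\alpha)}$ (for some $\alpha\ge0$), and let $(u_{mn})$ be a double sequence of real numbers that is $(\overline{N},p,q)$ summable to a number $\ell$. If $$\frac{P_m}{p_m}\Delta_{10}u_{mn}=O_L(1)\quad\text{and}\quad\frac{Q_n}{q_n}\Delta_{01}u_{mn}=O_L(1),$$ then $(u_{mn})$ is $P$-convergent to $\ell$.
   Context: Weights: $(p_m)_{m\ge0},(q_n)_{n\ge0}$ are sequences of positive reals with $P_m=\sum_{i=0}^m p_i\to\infty$ and $Q_n=\sum_{j=0}^n q_j\to\infty$. $SVA_{reg(\alpha)}$ denotes the set of positive sequences $(p_m)$ whose partial sums have the form $P_m=(m+1)^{\alpha}L(m)$ ($m\ge0$) with a constant $\alpha\ge0$ and a slowly varying function $L$ on $(0,\infty)$, i.e. $L$ positive, measurable, and $L(\lambda t)/L(t)\to1$ as $t\to\infty$ for every $\lambda>0$. The weighted means are $\sigma_{mn}=\frac{1}{P_mQ_n}\sum_{i=0}^m\sum_{j=0}^n p_iq_ju_{ij}$; $(u_{mn})$ is $(\overline{N},p,q)$ summable to $\ell$ if $(\sigma_{mn})$ is $P$-convergent to $\ell$. A double sequence $(a_{mn})$ is $P$-convergent to $\ell$ if for every $\epsilon>0$ there is $n_0$ with $|a_{mn}-\ell|<\epsilon$ whenever $m,n\ge n_0$. $\Delta_{10}u_{mn}=u_{mn}-u_{m-1,n}$ and $\Delta_{01}u_{mn}=u_{mn}-u_{m,n-1}$. For a real double array, $a_{mn}=O_L(1)$ means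 there exist constants $M>0$ and $n_0$ such that $a_{mn}\ge -M$ for all $m,n\ge n_0$. *)

(* Defs.v *)
From HB Require Import structures.
From mathcomp Require Import all_boot all_order all_algebra.
From mathcomp Require Import all_classical all_reals all_analysis.
Set Implicit Arguments. Unset Strict Implicit. Unset Printing Implicit Defensive.
Import Order.TTheory GRing.Theory Num.Theory.
Local Open Scope classical_set_scope.
Local Open Scope ring_scope.

Section Defs.
Variable R : realType.

Definition psum (p : nat -> R) (m : nat) : R := \sum_(i < m.+1) p i.

Definition diverges (a : nat -> R) : Prop :=
  forall M : R, exists N : nat, forall m, (N <= m)%N -> M < a m.

Definition slowly_varying (L : R -> R) : Prop :=
  (forall t, 0 < t -> 0 < L t) /\
  measurable_fun (`]0%R, +oo[%classic : set R) L /\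
  (forall lam : R, 0 < lam ->
     forall eps : R, 0 < eps -> exists M : R, forall t : R, M < t ->
       `| L (lam * t) / L t - 1 | < eps).

Definition SVA_reg (alpha : R) (p : nat -> R) : Prop :=
  (forall m, 0 < p m) /\
  exists L : R -> R, slowly_varying L /\
    forall m : nat, psum p m = (m.+1%:R) `^ alpha * L m%:R.

Definition wmean (p q : nat -> R) (u : nat -> nat -> R) (m n : nat) : R :=
  (psum p m * psum q n)^-1 *
  \sum_(i < m.+1) \sum_(j < n.+1) p i * q j * u i j.

Definition P_conv (a : nat -> nat -> R) (l : R) : Prop :=
  forall eps : R, 0 < eps -> exists n0 : nat, forall m n,
    (n0 <= m)%N -> (n0 <= n)%N -> `| a m n - l | < eps.

Definition NNsummable (p q : nat -> R) (u : nat -> nat -> R) (l : R) : Prop :=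
  P_conv (wmean p q u) l.

(* forward differences; at index 0 the truncated predecessor is used *)
Definition D10 (u : nat -> nat -> R) m n : R := u m n - u m.-1 n.
Definition D01 (u : nat -> nat -> R) m n : R := u m n - u m n.-1.

Definition O_L (a : nat -> nat -> R) : Prop :=
  exists M : R, 0 < M /\ exists n0 : nat, forall m n,
    (n0 <= m)%N -> (n0 <= n)%N -> - M <= a m n.

End Defs.

(* Main.v *)
Require Import Defs.
From HB Require Import structures.
From mathcomp Require Import all_boot all_order all_algebra.
From mathcomp Require Import all_classical all_reals all_analysis.
From mathcomp Require Import ring lra zify.
Import Order.TTheory GRing.Theory Num.Theory.
Local Open Scope ring_scope.

Section Helpers.
Variable R : realType.
Implicit Types (p : nat -> R).

Lemma psumS p m : psum p m.+1 = psum p m + p m.+1.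
Proof. by rewrite /psum big_ord_recr. Qed.

Lemma psum_gt0 p : (forall m, 0 < p m) -> forall m, 0 < psum p m.
Proof.
move=> hp; elim=> [|m IH]; first by rewrite /psum big_ord1.
by rewrite psumS addr_gt0.
Qed.

Lemma psum_le p : (forall m, 0 < p m) -> forall a b, (a <= b)%N -> psum p a <= psum p b.
Proof.
move=> hp a b /subnKC <-; elim: (b - a)%N => [|d IH]; first by rewrite addn0.
by rewrite addnS psumS (le_trans IH) // lerDl ltW.
Qed.

Arguments psum_gt0 {p}.
Arguments psum_le {p} hp {a b}.

Lemma psum_split p a A : (a <= A)%N ->
  psum p A = psum p a + \sum_(a.+1 <= i < A.+1) p i.
Proof.
move=> aA; rewrite /psum -!(big_mkord xpredT) (big_cat_nat _ (n := a.+1)) //.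
Qed.

Lemma cross (f : nat -> R) K T : f K <= T -> (exists k, (K <= k)%N /\ T < f k) ->
  exists k, (K <= k)%N /\ f k <= T /\ T < f k.+1.
Proof.
move=> hK [k [hKk hk]]; apply: contrapT => hn.
have H : forall d, f (K + d)%N <= T.
  elim=> [|d IH]; first by rewrite addn0.
  rewrite addnS; case: (leP (f (K+d).+1) T) => // h.
  by exfalso; apply: hn; exists (K + d)%N; split => //; apply: leq_addr.
  by move: (H (k - K)%N); rewrite subnKC // => /(lt_le_trans hk); rewrite ltxx.
Qed.

Lemma pow_small (x : R) n : 0 <= x <= 1 -> (1 + x) ^+ n <= 1 + 3 ^+ n * x.
Proof.
move=> /andP[x0 x1]; elim: n => [|n IH]; first by rewrite !expr0 mul1r lerDl.
have h3 : 1 <= (3:R) ^+ n by apply: exprn_ege1; lra.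
rewrite exprS [(3:R) ^+ n.+1]exprS.
have h1 : 0 <= 1 + x by lra.
apply: (le_trans (ler_wpM2l h1 IH)).
move: h3; set C := (3:R) ^+ n => h3.
have h4 : 0 <= C * x * (1 - x) by rewrite mulr_ge0 ?mulr_ge0 //; lra.
have h5 : 0 <= (C - 1) * x by rewrite mulr_ge0 //; lra.
nra.
Qed.

Lemma step_small (alpha : R) p : 0 <= alpha -> SVA_reg alpha p ->
  forall eta : R, 0 < eta -> exists K, forall m, (K <= m)%N ->
    psum p m.+1 <= (1 + eta) * psum p m.
Proof.
move=> a0 [hp [L [[hLpos [_ hLsv]] hP]]] eta eta0.
set e := Num.min eta 1 / 3.
have e0 : 0 < e by rewrite /e divr_gt0 // lt_min eta0 ltr01.
have ee : (1 + e) * (1 + e) <= 1 + eta.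
  have : e <= 1/3 by rewrite /e ler_pM2r // ge_min lexx orbT.
  have : e <= eta/3 by rewrite /e ler_pM2r // ge_min lexx.
  move=> h1 h2; nra.
pose n := Num.Def.archi_bound alpha.
have an : alpha <= n%:R by apply/ltW/archi_boundP.
pose C : R := 3 ^+ n.
have C0 : 0 < C by rewrite exprn_gt0.
pose b := (Num.Def.archi_bound (C / e)).+1.
have b0 : 0 < (b%:R : R) by rewrite ltr0n.
have hCb : C / b%:R <= e.
  rewrite ler_pdivrMr // mulrC -ler_pdivrMr //.
  rewrite /b -natr1; apply/ltW; rewrite (lt_le_trans (archi_boundP _)) ?lerDl //.
  by rewrite divr_ge0 // ltW.
set lam : R := (b.+1)%:R / b%:R.
have lam1 : 1 <= lam by rewrite /lam ler_pdivlMr // mul1r ler_nat.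
have hlam : lam `^ alpha <= 1 + e.
  apply: (le_trans (ler_powR lam1 an)); rewrite powR_mulrn ?(le_trans ler01) //.
  have -> : lam = 1 + b%:R^-1 by rewrite /lam -natr1 mulrDl divff ?gt_eqF // mul1r.
  have hx : 0 <= (b%:R : R)^-1 <= 1.
    by rewrite invr_ge0 ltW //= invf_le1 // ler1n /b.
  apply: (le_trans (pow_small (b%:R^-1) n hx)).
  by rewrite lerD2l -/C (le_trans _ hCb) // mulrC.
have lam0 : 0 < lam by rewrite (lt_le_trans ltr01).
have [M hM] := hLsv lam lam0 e e0.
pose K0 := (Num.Def.archi_bound (Num.max M 0)).+1.
have hK0 : forall k, (K0 <= k)%N -> M < (b * k)%:R.
  move=> k hk; apply: (lt_le_trans (y := (K0%:R))).
    have hMM : M <= Num.max M 0 by rewrite le_max lexx.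
    rewrite /K0 -natr1 (le_lt_trans hMM) // (lt_le_trans (archi_boundP _)) ?lerDl //.
    by rewrite le_max lexx orbT.
  by rewrite ler_nat (leq_trans hk) // leq_pmull.
have hL : forall k, (K0 <= k)%N -> L (b.+1 * k)%:R <= (1 + e) * L (b * k)%:R.
  move=> k hk.
  have t0 : 0 < ((b * k)%:R : R) by rewrite ltr0n muln_gt0 (leq_trans _ hk).
  have := hM _ (hK0 k hk).
  have -> : lam * (b * k)%:R = (b.+1 * k)%:R.
    by rewrite /lam !natrM mulrA divfK ?gt_eqF.
  move=> /ltW; rewrite ler_norml => /andP[_].
  rewrite lerBlDr ler_pdivrMr ?(hLpos _ t0) // => h; by rewrite addrC.
have hPk : forall k, (K0 <= k)%N -> psum p (b.+1 * k) <= (1+e) * (1+e) * psum p (b * k).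
  move=> k hk; rewrite !hP.
  have t0 : 0 < ((b * k)%:R : R) by rewrite ltr0n muln_gt0 (leq_trans _ hk).
  have hLk := hLpos _ t0.
  have hb1 : (b.+1 * k).+1%:R <= lam * ((b * k).+1)%:R.
    rewrite /lam mulrAC ler_pdivlMr // -!natrM ler_nat.
    by rewrite mulSn mulnS -mulnA (mulnC k b) leq_add2r leqnSn.
  have hp1 : (b.+1 * k).+1%:R `^ alpha <= (1 + e) * ((b * k).+1)%:R `^ alpha.
    apply: (le_trans (ge0_ler_powR a0 _ _ hb1)); rewrite ?nnegrE //.
      by rewrite mulr_ge0 // ltW.
    rewrite powRM //; last exact: ltW.
    by rewrite ler_wpM2r ?powR_ge0.
  have hA0 : 0 <= (b.+1 * k).+1%:R `^ alpha := powR_ge0 _ _.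
  have tt : 0 < ((b.+1 * k)%:R : R) by rewrite ltr0n muln_gt0 (leq_trans _ hk).
  have hLa : 0 <= L (b.+1 * k)%:R := ltW (hLpos _ tt).
  have := ler_pM hA0 hLa hp1 (hL k hk).
  move/le_trans; apply; rewrite le_eqVlt; apply/orP; left; apply/eqP; ring.
exists (b * (K0 + b))%N => m hm.
pose k := (m %/ b)%N.
have hk1 : (b * k <= m)%N by rewrite mulnC leq_trunc_div.
have hk2 : (m < b * k + b)%N by rewrite -mulnSr mulnC ltn_ceil.
have hk3 : (K0 + b <= k)%N.
  by rewrite /k -{1}(mulKn (K0 + b) (isT : (0 < b)%N)) leq_div2r.
have hm1 : (m.+1 <= b.+1 * k)%N.
  rewrite mulSn addnC; apply: leq_trans hk2 _; rewrite leq_add2l.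
  exact: leq_trans (leq_addl K0 b) hk3.
have P0 := psum_gt0 hp.
apply: (le_trans (psum_le hp hm1)).
apply: (le_trans (hPk k (leq_trans (leq_addr _ _) hk3))).
have h1 := psum_le hp hk1.
have h2 := P0 (b * k)%N.
have h3 : 0 <= (1 + e) * (1 + e) by rewrite mulr_ge0 //; lra.
apply: (le_trans (ler_wpM2l h3 h1)).
by rewrite ler_wpM2r // ltW.
Qed.

Lemma above p K1 d : (forall m, 0 < p m) -> diverges (psum p) -> 0 < d <= 1 ->
  (forall m, (K1 <= m)%N -> psum p m.+1 <= (1 + d) * psum p m) ->
  forall m, (K1 <= m)%N -> exists A, (m <= A)%N /\
    d * psum p m <= psum p A - psum p m /\ psum p A - psum p m <= 3 * d * psum p m.
Proof.
move=> hp hdiv /andP[d0 d1] hstep m hm.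
have P0 := psum_gt0 hp m.
have [N hN] := hdiv ((1 + d) * psum p m).
have [k [hk [h1 h2]]] : exists k, (m <= k)%N /\ psum p k <= (1 + d) * psum p m /\
    (1 + d) * psum p m < psum p k.+1.
  apply: cross; first by rewrite ler_pMl //; lra.
  exists (maxn N m); rewrite leq_maxr; split => //; apply: hN; exact: leq_maxl.
exists k.+1; split; first exact: (leq_trans hk).
have h3 := hstep k (leq_trans hm hk).
have Pk0 := psum_gt0 hp k.
split; first lra.
have : psum p k.+1 <= (1 + d) * ((1 + d) * psum p m).
  by apply: (le_trans h3); rewrite ler_pM2l //; lra.
nra.
Qed.

Lemma below p K1 d : (forall m, 0 < p m) -> diverges (psum p) -> 0 < d <= 1 ->
  (forall m, (K1 <= m)%N -> psum p m.+1 <= (1 + d) * psum p m) ->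
  forall N0, exists K, forall m, (K <= m)%N -> exists a, (N0 <= a)%N /\ (a <= m)%N /\
    d * psum p a <= psum p m - psum p a /\ psum p m - psum p a <= 3 * d * psum p a.
Proof.
move=> hp hdiv /andP[d0 d1] hstep N0.
pose K' := maxn N0 K1.
have [N hN] := hdiv ((1 + d) * psum p K').
exists N => m hm.
have hPm := hN m hm.
have P0 := psum_gt0 hp.
have [a [ha [h1 h2]]] : exists a, (K' <= a)%N /\ (1 + d) * psum p a <= psum p m /\
    psum p m < (1 + d) * psum p a.+1.
  apply: (cross (fun k => (1 + d) * psum p k)); first exact: ltW.
  exists (maxn K' m); rewrite leq_maxl; split => //.
  have := psum_le hp (leq_maxr K' m); have := P0 m; nra.
have Pa0 := P0 a.
have ham : (a <= m)%N.
  rewrite leqNgt; apply/negP => /ltnW ma; have := psum_le hp ma; nra.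
exists a; split; first exact: leq_trans (leq_maxl _ _) ha.
split => //.
have h3 := hstep a (leq_trans (leq_maxr _ _) ha).
split; first nra.
have : psum p m < (1 + d) * ((1 + d) * psum p a).
  by apply: (lt_le_trans h2); rewrite ler_pM2l //; lra.
nra.
Qed.

Lemma row_incr p (u : nat -> nat -> R) H n1 :
  (forall m, 0 < p m) -> 0 <= H ->
  (forall m n, (n1 <= m)%N -> (n1 <= n)%N -> - H <= psum p m / p m * D10 u m n) ->
  forall a j d, (n1 <= a)%N -> (n1 <= j)%N ->
    - H * (psum p (a + d) - psum p a) <= psum p a * (u (a + d)%N j - u a j).
Proof.
move=> hp H0 hD a j d ha hj; elim: d => [|d IH].
  by rewrite addn0 !subrr !mulr0.
have hpd := hp (a + d).+1.
have hq := hD (a + d).+1 j (leq_trans ha (leq_trans (leq_addr d a) (leqnSn _))) hj.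
have P0 := psum_gt0 hp a.
have hle := psum_le hp (leq_trans (leq_addr d a) (leqnSn _)).
set P' := psum p (a + d).+1 in hle hq.
set D := D10 u (a + d).+1 j in hq.
have h1 : - H * p (a + d).+1 <= P' * D.
  have := ler_wpM2r (ltW hpd) hq.
  by rewrite -mulrA (mulrC _ D) mulrA divfK ?gt_eqF // mulrC.
have h2 : - H * p (a + d).+1 <= psum p a * D.
  case: (leP 0 D) => hD0; nra.
have -> : u (a + d.+1)%N j - u a j = D + (u (a + d)%N j - u a j).
  by rewrite /D /D10 addnS /=; ring.
rewrite addnS psumS; move: IH; rewrite -/P'; lra.
Qed.

Lemma col_incr q (u : nat -> nat -> R) H n1 :
  (forall m, 0 < q m) -> 0 <= H ->
  (forall m n, (n1 <= m)%N -> (n1 <= n)%N -> - H <= psum q n / q n * D01 u m n) ->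
  forall i b d, (n1 <= i)%N -> (n1 <= b)%N ->
    - H * (psum q (b + d) - psum q b) <= psum q b * (u i (b + d)%N - u i b).
Proof.
move=> hp H0 hD i b d hi hb; elim: d => [|d IH].
  by rewrite addn0 !subrr !mulr0.
have hpd := hp (b + d).+1.
have hq := hD i (b + d).+1 hi (leq_trans hb (leq_trans (leq_addr d b) (leqnSn _))).
have P0 := psum_gt0 hp b.
have hle := psum_le hp (leq_trans (leq_addr d b) (leqnSn _)).
set P' := psum q (b + d).+1 in hle hq.
set D := D01 u i (b + d).+1 in hq.
have h1 : - H * q (b + d).+1 <= P' * D.
  have := ler_wpM2r (ltW hpd) hq.
  by rewrite -mulrA (mulrC _ D) mulrA divfK ?gt_eqF // mulrC.
have h2 : - H * q (b + d).+1 <= psum q b * D.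
  case: (leP 0 D) => hD0; nra.
have -> : u i (b + d.+1)%N - u i b = D + (u i (b + d)%N - u i b).
  by rewrite /D /D01 addnS /=; ring.
rewrite addnS psumS; move: IH; rewrite -/P'; lra.
Qed.

Lemma lb_div {Pa Pi PA x H : R} : 0 < Pa -> Pi <= PA -> 0 <= H ->
  - H * (Pi - Pa) <= Pa * x -> - H * ((PA - Pa) / Pa) <= x.
Proof.
move=> Pa0 hPi H0 h; set r := (PA - Pa) / Pa.
have hr : PA - Pa = r * Pa by rewrite /r divfK ?gt_eqF.
have : - H * (r * Pa) <= Pa * x by rewrite -hr; nra.
nra.
Qed.

Lemma lb_div2 {Pa Pi PA x H : R} : 0 < Pa -> Pa <= Pi -> Pi <= PA -> 0 <= H ->
  - H * (PA - Pi) <= Pi * x -> - H * ((PA - Pa) / Pa) <= x.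
Proof.
move=> Pa0 hai hPi H0 h; set r := (PA - Pa) / Pa.
have hr : PA - Pa = r * Pa by rewrite /r divfK ?gt_eqF.
have r0 : 0 <= r by rewrite /r divr_ge0 //; lra.
case: (leP 0 x) => hx; first nra.
have : Pi * x <= Pa * x by nra.
nra.
Qed.

End Helpers.

Arguments psum_gt0 {R p}.
Arguments psum_le {R p} hp {a b}.
Arguments row_incr {R p u H n1}.
Arguments col_incr {R q u H n1}.
Arguments psumS {R}.
Arguments psum_split {R}.
Arguments lb_div {R Pa Pi PA x H}.
Arguments lb_div2 {R Pa Pi PA x H}.
Arguments step_small {R}.
Arguments above {R}.
Arguments below {R}.
Section H2.
Variable R : realType.
Lemma upper_corner p q (u : nat -> nat -> R) H n1 :
  (forall m, 0 < p m) -> (forall m, 0 < q m) -> 0 <= H ->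
  (forall m n, (n1 <= m)%N -> (n1 <= n)%N -> - H <= psum p m / p m * D10 u m n) ->
  (forall m n, (n1 <= m)%N -> (n1 <= n)%N -> - H <= psum q n / q n * D01 u m n) ->
  forall a b i j A B, (n1 <= a)%N -> (n1 <= b)%N -> (a <= i)%N -> (i <= A)%N ->
    (b <= j)%N -> (j <= B)%N ->
  u a b - H * ((psum p A - psum p a) / psum p a + (psum q B - psum q b) / psum q b)
    <= u i j.
Proof.
move=> hp hq H0 h10 h01 a b i j A B ha hb hai hiA hbj hjB.
have h1 := row_incr hp H0 h10 a j (i - a) ha (leq_trans hb hbj).
rewrite subnKC // in h1.
have h1' := lb_div (psum_gt0 hp a) (psum_le hp hiA) H0 h1.
have h2 := col_incr hq H0 h01 a b (j - b) ha hb.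
rewrite subnKC // in h2.
have h2' := lb_div (psum_gt0 hq b) (psum_le hq hjB) H0 h2.
move: h1' h2'; set rP := (_ / psum p a); set rQ := (_ / psum q b).
move: (u i j) (u a j) (u a b) => x y z; lra.
Qed.

Lemma lower_corner p q (u : nat -> nat -> R) H n1 :
  (forall m, 0 < p m) -> (forall m, 0 < q m) -> 0 <= H ->
  (forall m n, (n1 <= m)%N -> (n1 <= n)%N -> - H <= psum p m / p m * D10 u m n) ->
  (forall m n, (n1 <= m)%N -> (n1 <= n)%N -> - H <= psum q n / q n * D01 u m n) ->
  forall a b i j A B, (n1 <= a)%N -> (n1 <= b)%N -> (a <= i)%N -> (i <= A)%N ->
    (b <= j)%N -> (j <= B)%N ->
  u i j <= u A B + H * ((psum p A - psum p a) / psum p a + (psum q B - psum q b) / psum q b).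
Proof.
move=> hp hq H0 h10 h01 a b i j A B ha hb hai hiA hbj hjB.
have hi : (n1 <= i)%N := leq_trans ha hai.
have hj : (n1 <= j)%N := leq_trans hb hbj.
have h1 := row_incr hp H0 h10 i B (A - i) hi (leq_trans hj hjB).
rewrite subnKC // in h1.
have h1' := lb_div2 (psum_gt0 hp a) (psum_le hp hai) (psum_le hp hiA) H0 h1.
have h2 := col_incr hq H0 h01 i j (B - j) hi hj.
rewrite subnKC // in h2.
have h2' := lb_div2 (psum_gt0 hq b) (psum_le hq hbj) (psum_le hq hjB) H0 h2.
move: h1' h2'; set rP := (_ / psum p a); set rQ := (_ / psum q b).
move: (u i j) (u i B) (u A B) => x y z; lra.
Qed.
End H2.

Section H3.
Variable R : realType.

Definition Ssum (p q : nat -> R) (u : nat -> nat -> R) x y :=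
  \sum_(i < x.+1) \sum_(j < y.+1) p i * q j * u i j.

Lemma S_bounds p q u (l e : R) x y : (forall m, 0 < p m) -> (forall m, 0 < q m) ->
  `|wmean p q u x y - l| < e ->
  psum p x * psum q y * (l - e) <= Ssum p q u x y /\ Ssum p q u x y <= psum p x * psum q y * (l + e).
Proof.
move=> hp hq h.
have P0 := psum_gt0 hp x; have Q0 := psum_gt0 hq y.
have PQ0 : 0 < psum p x * psum q y by rewrite mulr_gt0.
have -> : Ssum p q u x y = psum p x * psum q y * wmean p q u x y.
  by rewrite /wmean /Ssum mulrA mulfV ?gt_eqF // mul1r.
move: h; rewrite ltr_norml => /andP[h1 h2].
by split; rewrite ler_pM2l //; lra.
Qed.

Lemma block_eq p q u a A b B : (a <= A)%N -> (b <= B)%N ->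
  Ssum p q u A B - Ssum p q u a B - Ssum p q u A b + Ssum p q u a b =
  \sum_(a.+1 <= i < A.+1) \sum_(b.+1 <= j < B.+1) p i * q j * u i j.
Proof.
move=> aA bB.
have hS : forall x y, Ssum p q u x y =
    \sum_(0 <= i < x.+1) \sum_(0 <= j < y.+1) p i * q j * u i j.
  move=> x y; rewrite /Ssum big_mkord; apply: eq_bigr => i _.
  by rewrite big_mkord.
rewrite !hS.
rewrite (big_cat_nat _ (n := a.+1) (m := 0) (p := A.+1)) //=.
rewrite [X in _ - _ - X](big_cat_nat _ (n := a.+1) (m := 0) (p := A.+1)) //=.
have hB : forall i, \sum_(0 <= j < B.+1) p i * q j * u i j =
   \sum_(0 <= j < b.+1) p i * q j * u i j + \sum_(b.+1 <= j < B.+1) p i * q j * u i j.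
  by move=> i; rewrite (big_cat_nat _ (n := b.+1)).
under eq_bigr do rewrite hB.
under [X in _ + X - _ - _ + _]eq_bigr do rewrite hB.
rewrite !big_split /=.
ring.
Qed.


Lemma block_prod p q (c : R) a A b B : (a <= A)%N -> (b <= B)%N ->
  c * (psum p A - psum p a) * (psum q B - psum q b) =
  \sum_(a.+1 <= i < A.+1) \sum_(b.+1 <= j < B.+1) p i * q j * c.
Proof.
move=> aA bB; rewrite (psum_split p a A aA) (psum_split q b B bB).
have hxy : forall (x y : R), x + y - x = y by move=> x y; ring.
rewrite !hxy.
rewrite (mulrC c) -mulrA big_distrl /=; apply: eq_bigr => i _.
rewrite mulrA big_distrr /=; apply: eq_bigr => j _; ring.
Qed.

Lemma block_ge p q u (c : R) a A b B : (forall m, 0 < p m) -> (forall m, 0 < q m) ->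
  (a <= A)%N -> (b <= B)%N ->
  (forall i j, (a < i)%N -> (i <= A)%N -> (b < j)%N -> (j <= B)%N -> c <= u i j) ->
  c * (psum p A - psum p a) * (psum q B - psum q b) <=
  \sum_(a.+1 <= i < A.+1) \sum_(b.+1 <= j < B.+1) p i * q j * u i j.
Proof.
move=> hp hq aA bB h; rewrite block_prod //.
apply: ler_sum_nat => i /andP[h1 h2]; apply: ler_sum_nat => j /andP[h3 h4].
apply: ler_wpM2l; first by rewrite mulr_ge0 // ltW.
exact: h.
Qed.

Lemma block_le p q u (c : R) a A b B : (forall m, 0 < p m) -> (forall m, 0 < q m) ->
  (a <= A)%N -> (b <= B)%N ->
  (forall i j, (a < i)%N -> (i <= A)%N -> (b < j)%N -> (j <= B)%N -> u i j <= c) ->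
  \sum_(a.+1 <= i < A.+1) \sum_(b.+1 <= j < B.+1) p i * q j * u i j <=
  c * (psum p A - psum p a) * (psum q B - psum q b).
Proof.
move=> hp hq aA bB h; rewrite block_prod //.
apply: ler_sum_nat => i /andP[h1 h2]; apply: ler_sum_nat => j /andP[h3 h4].
apply: ler_wpM2l; first by rewrite mulr_ge0 // ltW.
exact: h.
Qed.


Lemma final_gen {Pa PA Qb QB w e eta d : R} :
  0 < Pa -> 0 < Qb -> 0 < d -> d <= 1 -> 0 < eta ->
  d * Pa <= PA - Pa -> PA - Pa <= 3 * d * Pa ->
  d * Qb <= QB - Qb -> QB - Qb <= 3 * d * Qb ->
  w * ((PA - Pa) * (QB - Qb)) <= e * ((PA + Pa) * (QB + Qb)) ->
  e = eta * d * d / 100 -> w <= eta / 4.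
Proof.
move=> Pa0 Qb0 d0 d1 eta0 hX1 hX2 hY1 hY2 h he.
set X := PA - Pa in hX1 hX2 h; set Y := QB - Qb in hY1 hY2 h.
have dPa : 0 < d * Pa by rewrite mulr_gt0.
have dQb : 0 < d * Qb by rewrite mulr_gt0.
have dPa1 : d * Pa <= Pa by rewrite ler_piMl // ltW.
have dQb1 : d * Qb <= Qb by rewrite ler_piMl // ltW.
have hA : PA + Pa <= 5 * Pa by move: hX2; rewrite /X; lra.
have hB : QB + Qb <= 5 * Qb by move: hY2; rewrite /Y; lra.
have hAB : (PA + Pa) * (QB + Qb) <= (5 * Pa) * (5 * Qb).
  apply: ler_pM => //; rewrite /X in hX1; rewrite /Y in hY1; lra.
have hD : (d * Pa) * (d * Qb) <= X * Y by apply: ler_pM => //; apply: ltW.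
have XY0 : 0 < X * Y by apply: mulr_gt0; lra.
have e0 : 0 <= e by rewrite he !mulr_ge0 // ltW.
have h2 : e * ((PA + Pa) * (QB + Qb)) <= e * ((5 * Pa) * (5 * Qb)) by rewrite ler_wpM2l.
have h3 : e * ((5 * Pa) * (5 * Qb)) = eta / 4 * ((d * Pa) * (d * Qb)) by rewrite he; field.
have h4 : eta / 4 * ((d * Pa) * (d * Qb)) <= eta / 4 * (X * Y).
  by rewrite ler_wpM2l // divr_ge0 // ltW.
have : w * (X * Y) <= eta / 4 * (X * Y) by lra.
by rewrite ler_pM2r.
Qed.

End H3.

Arguments upper_corner {R}.
Arguments lower_corner {R}.
Arguments S_bounds {R}.
Arguments block_eq {R}.
Arguments block_ge {R}.
Arguments block_le {R}.
Arguments Ssum {R}.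
Arguments final_gen {R Pa PA Qb QB w e eta d}.

Lemma c_bound {R : realType} {H d eta Pa PA Qb QB : R} : 0 <= H -> 0 < Pa -> 0 < Qb ->
  PA - Pa <= 3 * d * Pa -> QB - Qb <= 3 * d * Qb -> H * d <= eta / 12 ->
  H * ((PA - Pa) / Pa + (QB - Qb) / Qb) <= eta / 2.
Proof.
move=> H0 Pa0 Qb0 h1 h2 h3.
have r1 : (PA - Pa) / Pa <= 3 * d by rewrite ler_pdivrMr.
have r2 : (QB - Qb) / Qb <= 3 * d by rewrite ler_pdivrMr.
have : H * ((PA - Pa) / Pa + (QB - Qb) / Qb) <= H * (6 * d).
  by rewrite ler_wpM2l //; lra.
lra.
Qed.

Lemma lin_low {R : realType} {S1 S2 S3 S4 Pm Pa Qn Qb l e v : R} :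
 S1 - S2 - S3 + S4 <= v * (Pm - Pa) * (Qn - Qb) ->
 Pm * Qn * (l - e) <= S1 -> S2 <= Pa * Qn * (l + e) -> S3 <= Pm * Qb * (l + e) ->
 Pa * Qb * (l - e) <= S4 ->
 (l - v) * ((Pm - Pa) * (Qn - Qb)) <= e * ((Pm + Pa) * (Qn + Qb)).
Proof. move=> *; lra. Qed.

Lemma lin_up {R : realType} {S1 S2 S3 S4 PA Pm QB Qn l e v : R} :
 v * (PA - Pm) * (QB - Qn) <= S1 - S2 - S3 + S4 ->
 S1 <= PA * QB * (l + e) -> Pm * QB * (l - e) <= S2 -> PA * Qn * (l - e) <= S3 ->
 S4 <= Pm * Qn * (l + e) ->
 (v - l) * ((PA - Pm) * (QB - Qn)) <= e * ((PA + Pm) * (QB + Qn)).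
Proof. move=> *; lra. Qed.

Theorem theorem4p2 (R : realType) (alpha : R) (p q : nat -> R)
    (u : nat -> nat -> R) (l : R) :
  0 <= alpha ->
  SVA_reg alpha p -> SVA_reg alpha q ->
  diverges (psum p) -> diverges (psum q) ->
  NNsummable p q u l ->
  O_L (fun m n => psum p m / p m * D10 u m n) ->
  O_L (fun m n => psum q n / q n * D01 u m n) ->
  P_conv u l.
Proof.
move=> a0 hSp hSq divP divQ hsum [M1 [M10 [n01 hO1]]] [M2 [M20 [n02 hO2]]].
have hp := hSp.1; have hq := hSq.1.
set H := Num.max M1 M2.
have HM1 : M1 <= H by rewrite le_max lexx.
have HM2 : M2 <= H by rewrite le_max lexx orbT.
have H0 : 0 < H by apply: lt_le_trans HM1.
set n1 := maxn n01 n02.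
have h10 : forall m n, (n1 <= m)%N -> (n1 <= n)%N -> - H <= psum p m / p m * D10 u m n.
  move=> m n hm hn; have := hO1 m n (leq_trans (leq_maxl _ _) hm) (leq_trans (leq_maxl _ _) hn).
  by rewrite /=; apply: le_trans; rewrite lerN2.
have h01 : forall m n, (n1 <= m)%N -> (n1 <= n)%N -> - H <= psum q n / q n * D01 u m n.
  move=> m n hm hn; have := hO2 m n (leq_trans (leq_maxr _ _) hm) (leq_trans (leq_maxr _ _) hn).
  by rewrite /=; apply: le_trans; rewrite lerN2.
move=> eta eta0.
set d := Num.min 1 (eta / (12 * H)).
have d0 : 0 < d by rewrite lt_min ltr01 divr_gt0 // mulr_gt0.
have d1 : d <= 1 by rewrite ge_min lexx.
have Hd : H * d <= eta / 12.
  have : d <= eta / (12 * H) by rewrite ge_min lexx orbT.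
  rewrite ler_pdivlMr ?mulr_gt0 // => h.
  rewrite ler_pdivlMr //; move: h; rewrite (mulrC 12 H) mulrA (mulrC d H); lra.
have dd : 0 < d <= 1 by rewrite d0 d1.
set e := eta * d * d / 100.
have e0 : 0 < e by rewrite /e divr_gt0 // !mulr_gt0.
have [K1p hstp] := step_small _ _ a0 hSp _ d0.
have [K1q hstq] := step_small _ _ a0 hSq _ d0.
have [Ne hNe] := hsum e e0.
set N0 := maxn n1 Ne.
have [Kp hbp] := below _ _ _ hp divP dd hstp N0.
have [Kq hbq] := below _ _ _ hq divQ dd hstq N0.
exists (maxn (maxn Kp Kq) (maxn (maxn K1p K1q) N0)) => m n hm hn.
have hmax : forall x y, (x <= y)%N -> (forall z, (y <= z)%N -> (x <= z)%N).
  by move=> x y h z; apply: leq_trans.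
set T := maxn (maxn Kp Kq) (maxn (maxn K1p K1q) N0).
have hKp : (Kp <= T)%N := leq_trans (leq_maxl Kp Kq) (leq_maxl _ _).
have hKq : (Kq <= T)%N := leq_trans (leq_maxr Kp Kq) (leq_maxl _ _).
have hK1 : (maxn K1p K1q <= T)%N := leq_trans (leq_maxl _ N0) (leq_maxr _ _).
have hK1p : (K1p <= T)%N := leq_trans (leq_maxl K1p K1q) hK1.
have hK1q : (K1q <= T)%N := leq_trans (leq_maxr K1p K1q) hK1.
have hN0 : (N0 <= T)%N := leq_trans (leq_maxr (maxn K1p K1q) N0) (leq_maxr _ _).
have hn1 : (n1 <= T)%N := leq_trans (leq_maxl n1 Ne) hN0.
have hTNe : (Ne <= T)%N := leq_trans (leq_maxr n1 Ne) hN0.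
have hmKp := leq_trans hKp hm; have hnKq := leq_trans hKq hn.
have hmK1p := leq_trans hK1p hm; have hnK1q := leq_trans hK1q hn.
have hmn1 := leq_trans hn1 hm; have hnn1 := leq_trans hn1 hn.
have hmNe := leq_trans hTNe hm; have hnNe := leq_trans hTNe hn.
have Sb := fun x y hx hy => S_bounds p q u l e x y hp hq (hNe x y hx hy).
rewrite ltr_norml; apply/andP; split.
-
  have [a [haN0 [ham [ha1 ha2]]]] := hbp m hmKp.
  have [b [hbN0 [hbn [hb1 hb2]]]] := hbq n hnKq.
  have han1 : (n1 <= a)%N by apply: leq_trans haN0; rewrite /N0 leq_maxl.
  have hbn1 : (n1 <= b)%N by apply: leq_trans hbN0; rewrite /N0 leq_maxl.
  have haNe : (Ne <= a)%N by apply: leq_trans haN0; rewrite /N0 leq_maxr.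
  have hbNe : (Ne <= b)%N by apply: leq_trans hbN0; rewrite /N0 leq_maxr.
  set c := H * ((psum p m - psum p a) / psum p a + (psum q n - psum q b) / psum q b).
  have hc : c <= eta / 2 := c_bound (ltW H0) (psum_gt0 hp a) (psum_gt0 hq b) ha2 hb2 Hd.
  have hBS := block_le p q u (u m n + c) a m b n hp hq ham hbn
    (fun i j h1 h2 h3 h4 => lower_corner p q u H n1 hp hq (ltW H0) h10 h01 a b i j m n
       han1 hbn1 (ltnW h1) h2 (ltnW h3) h4).
  rewrite -block_eq // in hBS.
  have [s1 _] := Sb m n hmNe hnNe.
  have [_ s2] := Sb a n haNe hnNe.
  have [_ s3] := Sb m b hmNe hbNe.
  have [s4 _] := Sb a b haNe hbNe.
  have hw := lin_low hBS s1 s2 s3 s4.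
  have := final_gen (psum_gt0 hp a) (psum_gt0 hq b) d0 d1 eta0 ha1 ha2 hb1 hb2 hw erefl.
  lra.
-
  have [A [hmA [hA1 hA2]]] := above _ _ _ hp divP dd hstp m hmK1p.
  have [B [hnB [hB1 hB2]]] := above _ _ _ hq divQ dd hstq n hnK1q.
  set c := H * ((psum p A - psum p m) / psum p m + (psum q B - psum q n) / psum q n).
  have hc : c <= eta / 2 := c_bound (ltW H0) (psum_gt0 hp m) (psum_gt0 hq n) hA2 hB2 Hd.
  have hBS := block_ge p q u (u m n - c) m A n B hp hq hmA hnB
    (fun i j h1 h2 h3 h4 => upper_corner p q u H n1 hp hq (ltW H0) h10 h01 m n i j A B
       hmn1 hnn1 (ltnW h1) h2 (ltnW h3) h4).
  rewrite -block_eq // in hBS.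
  have hAe : (Ne <= A)%N := leq_trans hmNe hmA.
  have hBe : (Ne <= B)%N := leq_trans hnNe hnB.
  have [_ s1] := Sb A B hAe hBe.
  have [s2 _] := Sb m B hmNe hBe.
  have [s3 _] := Sb A n hAe hnNe.
  have [_ s4] := Sb m n hmNe hnNe.
  have hw := lin_up hBS s1 s2 s3 s4.
  have := final_gen (psum_gt0 hp m) (psum_gt0 hq n) d0 d1 eta0 hA1 hA2 hB1 hB2 hw erefl.
  lra.
Qed.
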